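(* Let $p_0:(0,2/5]\times(0,\infty)\to(0,\infty)$ be any function. Call a tuple $(\psi,\theta,\epsilon,C,t,K,f,g,V,W,\mathcal E)$ a counterexample if: $\epsilon\in(0,2/5]$, $C>0$; $\psi,\theta:\mathbb N\to\mathbb R_{\ge0}$ are finitely supported; $f,g:\mathbb N\to\mathbb R_{\ge0}$ are multiplicative with $(1\star f)(n)\le n$ and $(1\star g)(n)\le n$ for all $n\ge1$; $V,W\subseteq\mathbb N$, $t\ge1$, $K\in\mathbb R$; $\mathcal E\subseteq \mathcal E_{\psi,\theta}^{t,K}\cap(V\times W)$; and $$\mu_{\psi,\theta}^{f,g}(\mathcal E) > (100e^{C})^{P_{\psi,\theta}(\epsilon, C)}(\operatorname{Log} t)^{\frac{1}{2}(e^{40C}-1)}\big(\mu_{\psi}^{f}(V)\mu_{\theta}^{g}(W)e^{-CK}\big)^{\frac{1}{2}+\epsilon}.$$ Let $(\psi,\theta,\epsilon,C,t,K,f,g,V,W,\mathcal E)$ be a counterexample with $\lvert\mathcal P_{\psi,\theta}\rvert$ minimal among all counterexamples, and let $p\in\mathcal P_{\psi,\theta}$. For integers $i,j\ge0$ let $V_i=\{v\in V:\nu_p(v)=i\}$, $W_j=\{w\in W:\nu_p(w)=j\}$, $m(i,j)=\frac{\mu_{\psi,\theta}^{f,g}(\mathcal E\cap(V_i\times W_j))}{\mu_{\psi,\theta}^{f,g}(\mathcal E)}$, $\alpha_i=\mu_\psi^f(V_i)/\mu_\psi^f(V)$, $\beta_j=\mu_\theta^g(W_j)/\mu_\theta^g(W)$,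 and $q=\frac{2}{1-2\epsilon}$, $q'=\frac{2}{1+2\epsilon}$. Then for all $i,j\ge0$, $$m(i,j)\leq (100e^{C})^{-\mathbf 1_{p\leq p_0(\epsilon, C)}}\,p^{-\frac{\lvert i-j\rvert}{q}}\big(\alpha_i \beta_j e^{\mathbf 1_{i\neq j}\cdot C}\big)^{\frac{1}{q'}}.$$
   Context: For $v,w\in\mathbb N$, $t\geq1$: $\omega_t(v,w) = \lvert\{ p \text{ prime}\le t : p\mid \frac{vw}{\gcd(v,w)^2}\}\rvert$; $D_{\psi,\theta}(v,w) = \frac{\max(w\psi(v),v\theta(w))}{\gcd(v,w)}$. $\mu_\psi^f(v)=\frac{f(v)\psi(v)}{v}$, $\mu_\psi^f(V)=\sum_{v\in V}\mu_\psi^f(v)$, $\mu_{\psi,\theta}^{f,g}(\mathcal E)=\sum_{(v,w)\in\mathcal E}\mu_\psi^f(v)\mu_\theta^g(w)$. $V_\psi=\operatorname{supp}\psi$, $W_\theta=\operatorname{supp}\theta$, $\mathcal E_{\psi,\theta}^{t,K}=\{(v,w)\in V_\psi\times W_\theta : D_{\psi,\theta}(v,w)\le 1,\ \omega_t(v,w)\ge K\}$. $\mathcal P_{\psi,\theta}=\{p \text{ prime}: \exists (v,w)\in V_\psi\times W_\theta,\ p\mid vw\}$ and $P_{\psi,\theta}(\epsilon,C)=p_0(\epsilon,C)+\lvert\mathcal P_{\psi,\theta}\cap[1,p_0(\epsilon,C)]\rvert$. $(1\star f)(n)=\sum_{d\mid n}f(d)$. $\operatorname{Log} t=\max\{1,\log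 t\}$. $\nu_p$ is the $p$-adic valuation; $\mathbf 1_S$ is $1$ if the condition $S$ holds and $0$ otherwise. *)

(* Defs.v *)
From HB Require Import structures.
From mathcomp Require Import all_boot all_order all_algebra finmap.
From mathcomp Require Import all_classical all_reals all_analysis.
Set Implicit Arguments. Unset Strict Implicit. Unset Printing Implicit Defensive.
Import Order.TTheory GRing.Theory Num.Theory.
Local Open Scope classical_set_scope.
Local Open Scope ring_scope.

Section Defs.
Variable R : realType.

Definition supp (psi : nat -> R) : set nat := [set n | (0 < n)%N /\ psi n != 0].

Definition omega_t (t : R) (v w : nat) : nat :=
  size [seq p <- primes ((v * w) %/ (gcdn v w) ^ 2) | (p%:R <= t)%R].

Definition Dpt (psi theta : nat -> R) (v w : nat) : R :=
  Num.max (w%:R * psi v) (v%:R * theta w) / (gcdn v w)%:R.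

Definition mu1 (f psi : nat -> R) (v : nat) : R := f v * psi v / v%:R.

Definition muS (f psi : nat -> R) (V : set nat) : R := \sum_(v \in V) mu1 f psi v.

Definition muE (f g psi theta : nat -> R) (E : set (nat * nat)) : R :=
  \sum_(x \in E) (mu1 f psi x.1 * mu1 g theta x.2).

Definition Eset (psi theta : nat -> R) (t K : R) : set (nat * nat) :=
  [set x | supp psi x.1 /\ supp theta x.2 /\ Dpt psi theta x.1 x.2 <= 1
           /\ K <= (omega_t t x.1 x.2)%:R].

Definition Pset (psi theta : nat -> R) : set nat :=
  [set p | prime p /\ exists v w, supp psi v /\ supp theta w /\ (p %| v * w)%N].

Definition cardP (psi theta : nat -> R) : nat := #|` fset_set (Pset psi theta) |.

Definition Pbig (p0 : R -> R -> R) (psi theta : nat -> R) (eps C : R) : R :=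
  p0 eps C + (#|` fset_set (Pset psi theta `&` [set p | (1 <= p)%N /\ p%:R <= p0 eps C]) |)%:R.

Definition Logt (t : R) : R := Num.max 1 (ln t).

Definition conv1 (f : nat -> R) (n : nat) : R := \sum_(d <- divisors n) f d.

Definition multiplicative (f : nat -> R) : Prop :=
  f 1%N = 1 /\ forall m n, (0 < m)%N -> (0 < n)%N -> coprime m n -> f (m * n)%N = f m * f n.

Definition admissible_fun (f : nat -> R) : Prop :=
  (forall n, (0 < n)%N -> 0 <= f n) /\ multiplicative f /\
  (forall n, (0 < n)%N -> conv1 f n <= n%:R).

Definition nonneg_fin_supp (psi : nat -> R) : Prop :=
  (forall n, (0 < n)%N -> 0 <= psi n) /\ finite_set (supp psi).

Definition counterexample (p0 : R -> R -> R) (psi theta : nat -> R) (eps C t K : R)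
  (f g : nat -> R) (V W : set nat) (E : set (nat * nat)) : Prop :=
  [/\ 0 < eps <= 2 / 5, 0 < C,
      nonneg_fin_supp psi /\ nonneg_fin_supp theta,
      admissible_fun f /\ admissible_fun g &
      [/\ 1 <= t,
      E `<=` Eset psi theta t K `&` (V `*` W) &
      muE f g psi theta E >
        (100 * expR C) `^ (Pbig p0 psi theta eps C)
        * (Logt t) `^ ((expR (40 * C) - 1) / 2)
        * (muS f psi V * muS g theta W * expR (- (C * K))) `^ (1 / 2 + eps)]].

End Defs.

(* Main.v *)
Require Import Defs.
From HB Require Import structures.
From mathcomp Require Import all_boot all_order all_algebra finmap.
From mathcomp Require Import all_classical all_reals all_analysis.
From mathcomp Require Import ring lra zify.
Import Order.TTheory GRing.Theory Num.Theory.
Local Open Scope classical_set_scope.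
Local Open Scope ring_scope.

Set Implicit Arguments. Unset Strict Implicit. Unset Printing Implicit Defensive.
Section NatL.
Local Open Scope nat_scope.
Lemma size_filter_primes_mul (P : pred nat) p k n : prime p ->
  (size [seq q <- primes (p ^ k * n) | P q] <= size [seq q <- primes n | P q] + (k != 0%N))%N.
Proof.
move=> pp; case: k => [|k]; first by rewrite expn0 mul1n addn0.
rewrite addn1.
rewrite -[X in (_ <= X)%N]/(size (p :: [seq q <- primes n | P q])).
apply: uniq_leq_size; first by apply: filter_uniq; apply: primes_uniq.
move=> q; rewrite mem_filter mem_primes => /andP [Pq /and3P [qp npos qd]].
rewrite inE mem_filter mem_primes qp Pq /=.
move: npos; rewrite muln_gt0 => /andP[_ npos].
rewrite Euclid_dvdM // Euclid_dvdX // in qd. case/orP: qd => [/andP [qdp _]|qdn].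
  by rewrite -dvdn_prime2 // qdp.
by rewrite npos qdn orbT.
Qed.

Lemma gcd_pow p i j a b : prime p -> ~~ (p %| a)%N -> ~~ (p %| b)%N ->
  gcdn (p ^ i * a) (p ^ j * b) = (p ^ (minn i j) * gcdn a b)%N.
Proof.
move=> pp pa pb.
have ei : p ^ i = (p ^ minn i j * p ^ (i - minn i j))%N by rewrite -expnD subnKC // geq_minl.
have ej : p ^ j = (p ^ minn i j * p ^ (j - minn i j))%N by rewrite -expnD subnKC // geq_minr.
rewrite ei ej -!mulnA -muln_gcdr; congr (_ * _)%N.
have ca : forall e, coprime a (p ^ e) by move=> e; rewrite coprimeXr // coprime_sym prime_coprime.
have cb : forall e, coprime b (p ^ e) by move=> e; rewrite coprimeXr // coprime_sym prime_coprime.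
case: (leqP i j) => hij.
  rewrite subnn expn0 mul1n Gauss_gcdr //.
rewrite subnn expn0 mul1n gcdnC Gauss_gcdr // gcdnC //.
Qed.

Lemma quot_pow p i j a b : prime p -> ~~ (p %| a)%N -> ~~ (p %| b)%N ->
  ((p ^ i * a) * (p ^ j * b) %/ (gcdn (p ^ i * a) (p ^ j * b)) ^ 2)%N =
  (p ^ ((i - minn i j) + (j - minn i j)) * ((a * b) %/ (gcdn a b) ^ 2))%N.
Proof.
move=> pp pa pb; rewrite gcd_pow //.
have ei : p ^ i = (p ^ minn i j * p ^ (i - minn i j))%N by rewrite -expnD subnKC // geq_minl.
have ej : p ^ j = (p ^ minn i j * p ^ (j - minn i j))%N by rewrite -expnD subnKC // geq_minr.
have hd : ((gcdn a b) ^ 2 %| a * b)%N by rewrite expnS expn1 dvdn_mul // ?dvdn_gcdl ?dvdn_gcdr.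
rewrite muln_divA // expnMn.
have -> : (p ^ i * a * (p ^ j * b) = (p ^ minn i j) ^ 2 * (p ^ (i - minn i j + (j - minn i j)) * (a * b)))%N.
  rewrite ei ej expnD expnS expn1; ring.
rewrite divnMl // !expn_gt0 prime_gt0 //.
Qed.
End NatL.
Lemma fcard_le_sub (T : choiceType) (A B : set T) : finite_set B -> A `<=` B ->
  (#|` fset_set A| <= #|` fset_set B|)%N.
Proof.
move=> fB AB; have fA := sub_finite_set AB fB.
apply: fsubset_leq_card; by rewrite -fset_set_sub.
Qed.

Lemma fcard_lt_sub (T : choiceType) (A B : set T) x : finite_set B -> A `<=` B -> B x -> ~ A x ->
  (#|` fset_set A| < #|` fset_set B|)%N.
Proof.
move=> fB AB Bx nAx; have fA := sub_finite_set AB fB.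
apply: fproper_ltn_card; rewrite fproperE; apply/andP; split.
  by rewrite -fset_set_sub.
apply/negP => H; have : B `<=` A by rewrite fset_set_sub.
by move=> /(_ x Bx).
Qed.

Lemma fsum_le_sub (R : realType) (T : choiceType) (A B : set T) (F : T -> R) : A `<=` B ->
  (forall x, B x -> 0 <= F x) -> finite_set (B `&` F @^-1` [set~ 0]) ->
  \sum_(x \in A) F x <= \sum_(x \in B) F x.
Proof.
move=> AB F0 fin.
rewrite [X in X <= _]fsbig_supp [X in _ <= X]fsbig_supp.
rewrite [X in _ <= X](fsbigID (A `&` F @^-1` [set~ 0])) //.
have -> : (B `&` F @^-1` [set~ 0]) `&` (A `&` F @^-1` [set~ 0]) = A `&` F @^-1` [set~ 0].
  apply/seteqP; split => x /=; first by case=> _.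
  by move=> [Ax Fx]; split=> //; split=> //; apply: AB.
rewrite lerDl; apply: fsumr_ge0 => x [[Bx _] _]; exact: F0.
Qed.
Lemma final_alg (R : realType) (A L a ip P P' X cV cW MV MW MV' MW' ME M' ex e1 : R) :
  1 <= A -> 0 < L -> 0 < a -> 0 < 1 - a -> 0 < MV -> 0 < MW -> 0 <= MV' -> 0 <= MW' ->
  0 < ex -> 0 < e1 -> 0 <= cV -> 0 <= cW -> 0 <= M' ->
  (cV * cW) `^ (1 - a) <= X ->
  P' + ip <= P ->
  A `^ P * L * (MV * MW * ex) `^ a < ME ->
  M' <= A `^ P' * L * (MV' * MW' * (ex * e1)) `^ a ->
  (cV * cW * M') / ME <= A `^ (- ip) * X * ((cV * MV') / MV * ((cW * MW') / MW) * e1) `^ a.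
Proof.
move=> A1 L0 a0 a1 MV0 MW0 MV'0 MW'0 ex0 e10 cV0 cW0 M'0 hX hP hE h'.
have A0 : 0 < A by apply: lt_le_trans A1.
set c := cV * cW.
have c0 : 0 <= c by apply: mulr_ge0.
have X0 : 0 <= X by apply: le_trans hX; apply: powR_ge0.
have R0pos : 0 < A `^ P * L * (MV * MW * ex) `^ a.
  by rewrite !mulr_gt0 // ?powR_gt0 // !mulr_gt0.
have ME0 : 0 < ME by apply: lt_trans hE.
have RHS0 : 0 <= A `^ (- ip) * X * ((cV * MV') / MV * ((cW * MW') / MW) * e1) `^ a.
  by rewrite !mulr_ge0 // ?powR_ge0.
have [->|cn0] := eqVneq c 0; first by rewrite mul0r mul0r.
have cpos : 0 < c by rewrite lt_def cn0 c0.
rewrite ler_pdivrMr //.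
apply: (@le_trans _ _ (A `^ (- ip) * X * ((cV * MV') / MV * ((cW * MW') / MW) * e1) `^ a *
    (A `^ P * L * (MV * MW * ex) `^ a))); last by rewrite ler_wpM2l // ltW.
apply: (@le_trans _ _ (c * (A `^ P' * L * (MV' * MW' * (ex * e1)) `^ a))).
  by rewrite ler_wpM2l.
have ec : c = c `^ (1 - a) * c `^ a.
  by rewrite -powRD ?cn0 ?implybT // subrK powRr1.
have eQ : ((cV * MV') / MV * ((cW * MW') / MW) * e1) `^ a * (MV * MW * ex) `^ a =
          c `^ a * (MV' * MW' * (ex * e1)) `^ a.
  have q0 : 0 <= (cV * MV') / MV * ((cW * MW') / MW) * e1.
    rewrite !mulr_ge0 // ?invr_ge0 ?ltW //.
  have m0 : 0 <= MV * MW * ex by rewrite !mulr_ge0 // ltW.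
  have m1 : 0 <= MV' * MW' * (ex * e1) by rewrite !mulr_ge0 // ltW.
  rewrite -(powRM _ q0 m0) -(powRM _ c0 m1).
  by f_equal; rewrite /c; field; rewrite !gt_eqF.
have eA : A `^ (- ip) * A `^ P = A `^ (P - ip).
  by rewrite -powRD ?(gt_eqF A0) ?implybT // addrC.
have hA : A `^ P' <= A `^ (P - ip) by apply: ler_powR => //; lra.
rewrite {1}ec.
have -> : A `^ (- ip) * X * ((cV * MV') / MV * ((cW * MW') / MW) * e1) `^ a *
    (A `^ P * L * (MV * MW * ex) `^ a) =
    (A `^ (- ip) * A `^ P) * L * X * (((cV * MV') / MV * ((cW * MW') / MW) * e1) `^ a * (MV * MW * ex) `^ a)
  by ring.
rewrite eQ eA.
have -> : c `^ (1 - a) * c `^ a * (A `^ P' * L * (MV' * MW' * (ex * e1)) `^ a) =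
   A `^ P' * L * c `^ (1 - a) * (c `^ a * (MV' * MW' * (ex * e1)) `^ a) by ring.
apply: ler_wpM2r; first by rewrite mulr_ge0 // powR_ge0.
apply: ler_pM => //.
- by rewrite mulr_ge0 // ?powR_ge0 // ltW.
- exact: powR_ge0.
- by apply: ler_wpM2r => //; rewrite ltW.
Qed.

Definition shiftf (R : realType) (p i e : nat) (psi : nat -> R) : nat -> R :=
  fun n => if (p %| n)%N then 0 else (p ^ e)%N%:R * psi (p ^ i * n)%N.

Definition fmulP (R : realType) (f : nat -> R) := forall m n, (0 < m)%N -> (0 < n)%N ->
  coprime m n -> f (m * n)%N = f m * f n.

Lemma ndvd_gt0 p n : ~~ (p %| n)%N -> (0 < n)%N.
Proof. by case: n => // ; rewrite dvdn0. Qed.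

Lemma mu1_shift (R : realType) (f psi : nat -> R) p i e n : prime p -> fmulP f ->
  ~~ (p %| n)%N ->
  mu1 f psi (p ^ i * n)%N = f (p ^ i)%N / ((p ^ i)%N%:R * (p ^ e)%N%:R) * mu1 f (shiftf p i e psi) n.
Proof.
move=> pp fm hn; have n0 := ndvd_gt0 hn.
rewrite /mu1 /shiftf (negbTE hn) fm ?expn_gt0 ?(prime_gt0 pp) //; last first.
  by rewrite coprimeXl // prime_coprime.
rewrite natrM; field.
by rewrite !pnatr_eq0 -!lt0n n0 !expn_gt0 prime_gt0.
Qed.

Lemma muS_shift (R : realType) (f psi : nat -> R) p i e (V : set nat) : prime p -> fmulP f ->
  muS f psi [set v | V v /\ logn p v = i] =
  f (p ^ i)%N / ((p ^ i)%N%:R * (p ^ e)%N%:R) * muS f (shiftf p i e psi) [set v | V (p ^ i * v)%N].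
Proof.
move=> pp fm; rewrite /muS.
rewrite -(fsbig_widen ([set v | V v /\ logn p v = i] `&` [set v | (0 < v)%N])); first last.
- move=> x [Dx /not_andP [//|]]; rewrite /= lt0n => /negP; rewrite negbK => /eqP -> /=.
  by rewrite /mu1 invr0 mulr0.
- by move=> x [].
rewrite -[in RHS](fsbig_widen ([set v | V (p ^ i * v)%N] `&` [set v | ~~ (p %| v)%N])); first last.
- move=> x [Dx /not_andP [//|]]; rewrite /= => /negP; rewrite negbK => hx.
  by rewrite /mu1 /shiftf hx mulr0 mul0r.
- by move=> x [].
have -> : [set v | V v /\ logn p v = i] `&` [set v | (0 < v)%N] =
    (fun n => (p ^ i * n)%N) @` ([set v | V (p ^ i * v)%N] `&` [set v | ~~ (p %| v)%N]).
  apply/seteqP; split => x /=.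
    move=> [[Vx lx] x0]; have [m cm ex] := pfactor_coprime pp x0.
    have ex' : (p ^ i * m)%N = x by rewrite [RHS]ex lx mulnC.
    exists m => //.
    by split; [rewrite ex' | rewrite -prime_coprime].
  move=> [n [Vn hn] <-]; have n0 := ndvd_gt0 hn.
  split; last by rewrite muln_gt0 expn_gt0 prime_gt0.
  split => //; rewrite lognM ?expn_gt0 ?(prime_gt0 pp) // pfactorK // logn_coprime ?addn0 //.
  by rewrite prime_coprime.
rewrite fsbig_image; last first.
  move=> x y _ _ /eqP; rewrite eqn_mul2l expn_eq0 (gtn_eqF (prime_gt0 pp)) /=.
  by move/eqP.
rewrite mulr_fsumr; apply: eq_fsbigr => n; rewrite inE => -[_ hn].
exact: mu1_shift.
Qed.

Lemma muE_shift (R : realType) (f g psi theta : nat -> R) p i j e e' (V W : set nat)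
  (E : set (nat * nat)) : prime p -> fmulP f -> fmulP g ->
  (forall x, E x -> [/\ (0 < x.1)%N, (0 < x.2)%N, V x.1 & W x.2]) ->
  muE f g psi theta (E `&` ([set v | V v /\ logn p v = i] `*` [set w | W w /\ logn p w = j])) =
  (f (p ^ i)%N / ((p ^ i)%N%:R * (p ^ e)%N%:R)) * (g (p ^ j)%N / ((p ^ j)%N%:R * (p ^ e')%N%:R)) *
  muE f g (shiftf p i e psi) (shiftf p j e' theta)
    [set y | ~~ (p %| y.1)%N /\ ~~ (p %| y.2)%N /\ E ((p ^ i * y.1)%N, (p ^ j * y.2)%N)].
Proof.
move=> pp fm gm hE; rewrite /muE.
have lg a k : ~~ (p %| a)%N -> logn p (p ^ k * a) = k.
  move=> ha; rewrite lognM ?expn_gt0 ?(prime_gt0 pp) ?(ndvd_gt0 ha) // pfactorK //.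
  by rewrite logn_coprime ?addn0 // prime_coprime.
have -> : E `&` ([set v | V v /\ logn p v = i] `*` [set w | W w /\ logn p w = j]) =
    (fun y => ((p ^ i * y.1)%N, (p ^ j * y.2)%N)) @`
    [set y | ~~ (p %| y.1)%N /\ ~~ (p %| y.2)%N /\ E ((p ^ i * y.1)%N, (p ^ j * y.2)%N)].
  apply/seteqP; split => -[x1 x2] /=.
    move=> [Ex [[Vx lx] [Wx lw]]]; have [x10 x20 _ _] := hE _ Ex.
    have [m1 cm1 ex1] := pfactor_coprime pp x10.
    have [m2 cm2 ex2] := pfactor_coprime pp x20.
    have ex1' : (p ^ i * m1)%N = x1 by rewrite [RHS]ex1 lx mulnC.
    have ex2' : (p ^ j * m2)%N = x2 by rewrite [RHS]ex2 lw mulnC.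
    exists (m1, m2) => /=; last by rewrite ex1' ex2'.
    by rewrite -!prime_coprime // ex1' ex2'.
  move=> [[y1 y2] /= [h1 [h2 Ey]] [<- <-]].
  have [_ _ Vy Wy] := hE _ Ey.
  by split => //; split; split => //; apply: lg.
rewrite fsbig_image; last first.
  move=> [x1 x2] [y1 y2] _ _ /= [].
  move=> /eqP; rewrite eqn_mul2l expn_eq0 (gtn_eqF (prime_gt0 pp)) /= => /eqP ->.
  move=> /eqP; rewrite eqn_mul2l expn_eq0 (gtn_eqF (prime_gt0 pp)) /= => /eqP ->.
  by [].
rewrite mulr_fsumr; apply: eq_fsbigr => -[y1 y2]; rewrite inE => -[/= h1 [h2 _]].
rewrite (mu1_shift _ _ e pp fm h1) (mu1_shift _ _ e' pp gm h2).
ring.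
Qed.

Section S5.
Variable R : realType.

Lemma f_le_id (f : nat -> R) (n : nat) : (forall m : nat, (0 < m)%N -> 0 <= f m) ->
  (forall m : nat, (0 < m)%N -> Defs.conv1 f m <= m%:R) -> (0 < n)%N -> f n <= n%:R.
Proof.
move=> f0 fc n0; apply: le_trans (fc _ n0); rewrite /Defs.conv1.
rewrite (bigD1_seq n) ?divisors_uniq // -?dvdn_divisors //= lerDl.
rewrite big_seq_cond; apply: sumr_ge0 => d /andP [hd _]; apply: f0.
by rewrite -dvdn_divisors // in hd; apply: dvdn_gt0 hd.
Qed.

Lemma mu1_ge0 (f psi : nat -> R) v : (forall m : nat, (0 < m)%N -> 0 <= f m) ->
  (forall m : nat, (0 < m)%N -> 0 <= psi m) -> 0 <= mu1 f psi v.
Proof.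
move=> f0 p0; rewrite /mu1; case: v => [|v]; first by rewrite invr0 mulr0.
by rewrite !mulr_ge0 ?f0 ?p0 // invr_ge0.
Qed.

Lemma mu1_fin (f psi : nat -> R) (V : set nat) : finite_set (supp psi) ->
  finite_set (V `&` mu1 f psi @^-1` [set~ 0]).
Proof.
move=> fin; apply: sub_finite_set fin => v [_ /= h]; split.
  by case: v h => //; rewrite /mu1 invr0 mulr0.
by apply/negP => /eqP h0; apply: h; rewrite /mu1 h0 mulr0 mul0r.
Qed.

Lemma supp_shift (psi : nat -> R) p i e n : prime p ->
  supp (shiftf p i e psi) n <-> (supp psi (p ^ i * n)%N /\ ~~ (p %| n)%N).
Proof.
move=> pp; rewrite /supp /shiftf /=; split.
  move=> [n0]; case: ifP => hd; first by rewrite eqxx.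
  move=> h; split; last by [].
  split; first by rewrite muln_gt0 expn_gt0 prime_gt0.
  by apply/negP => /eqP h0; move: h; rewrite h0 mulr0 eqxx.
move=> [[_ h] hn]; rewrite (negbTE hn) (ndvd_gt0 hn); split => //.
by rewrite mulf_neq0 // pnatr_eq0 expn_eq0 (gtn_eqF (prime_gt0 pp)).
Qed.

Lemma shift_nfs (psi : nat -> R) p i e : prime p -> nonneg_fin_supp psi ->
  nonneg_fin_supp (shiftf p i e psi).
Proof.
move=> pp [p0 fin]; split.
  move=> n n0; rewrite /shiftf; case: ifP => // _.
  by rewrite mulr_ge0 // p0 // muln_gt0 expn_gt0 prime_gt0.
apply: (@sub_finite_set _ _ ((fun n => (p ^ i * n)%N) @^-1` supp psi)).
  by move=> n /(supp_shift _ _ _ _ pp) [].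
apply: finite_preimage => // x y _ _ /eqP.
by rewrite eqn_mul2l expn_eq0 (gtn_eqF (prime_gt0 pp)) /= => /eqP.
Qed.

Lemma Pset_fin (psi theta : nat -> R) : finite_set (supp psi) -> finite_set (supp theta) ->
  finite_set (Pset psi theta).
Proof.
move=> fp ft.
apply: (@sub_finite_set _ _ (\bigcup_(v in supp psi) \bigcup_(w in supp theta)
   [set q | (q %| v * w)%N])).
  move=> q [_ [v [w [sv [sw hq]]]]]; exists v => //; exists w => //.
apply: bigcup_finite => // v [v0 _]; apply: bigcup_finite => // w [w0 _].
apply: (@sub_finite_set _ _ `I_((v * w).+1)); last exact: finite_II.
move=> q /= hq; rewrite ltnS; apply: dvdn_leq => //; by rewrite muln_gt0 v0 w0.
Qed.

Lemma Pset_shift (psi theta : nat -> R) p i j e e' : prime p ->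
  Pset (shiftf p i e psi) (shiftf p j e' theta) `<=` Pset psi theta /\
  ~ Pset (shiftf p i e psi) (shiftf p j e' theta) p.
Proof.
move=> pp; split.
  move=> q [qp [v [w [/(supp_shift _ _ _ _ pp) [sv _] [/(supp_shift _ _ _ _ pp) [sw _] hq]]]]].
  split => //; exists (p ^ i * v)%N, (p ^ j * w)%N; split => //; split => //.
  apply: dvdn_trans hq _; apply: dvdn_mul; exact: dvdn_mull.
move=> [_ [v [w [/(supp_shift _ _ _ _ pp) [_ hv] [/(supp_shift _ _ _ _ pp) [_ hw] hq]]]]].
by move: hq; rewrite Euclid_dvdM // (negbTE hv) (negbTE hw).
Qed.

Lemma Dpt_shift (psi theta : nat -> R) p i j y1 y2 : prime p ->
  ~~ (p %| y1)%N -> ~~ (p %| y2)%N ->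
  Dpt (shiftf p i (j - minn i j) psi) (shiftf p j (i - minn i j) theta) y1 y2 =
  Dpt psi theta (p ^ i * y1)%N (p ^ j * y2)%N.
Proof.
move=> pp h1 h2; rewrite /Dpt /shiftf (negbTE h1) (negbTE h2) gcd_pow //.
have ei : (p ^ i = p ^ minn i j * p ^ (i - minn i j))%N by rewrite -expnD subnKC // geq_minl.
have ej : (p ^ j = p ^ minn i j * p ^ (j - minn i j))%N by rewrite -expnD subnKC // geq_minr.
pose P : R := (p ^ minn i j)%N%:R.
have P0 : 0 < P by rewrite ltr0n expn_gt0 prime_gt0.
have hi : (p ^ i)%N%:R = P * (p ^ (i - minn i j))%N%:R :> R by rewrite ei natrM.
have hj : (p ^ j)%N%:R = P * (p ^ (j - minn i j))%N%:R :> R by rewrite ej natrM.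
rewrite !natrM hi hj.
have -> : P * (p ^ (j - minn i j))%N%:R * y2%:R * psi (p ^ i * y1)%N =
  P * (y2%:R * ((p ^ (j - minn i j))%N%:R * psi (p ^ i * y1)%N)) by ring.
have -> : P * (p ^ (i - minn i j))%N%:R * y1%:R * theta (p ^ j * y2)%N =
  P * (y1%:R * ((p ^ (i - minn i j))%N%:R * theta (p ^ j * y2)%N)) by ring.
rewrite -maxr_pMr ?ltW //.
have g0 : (gcdn y1 y2)%:R != 0 :> R.
  by rewrite pnatr_eq0 -lt0n gcdn_gt0 (ndvd_gt0 h1).
by field; rewrite g0 gt_eqF.
Qed.

Lemma omega_shift t p i j y1 y2 : prime p -> ~~ (p %| y1)%N -> ~~ (p %| y2)%N ->
  (omega_t (R:=R) t (p ^ i * y1)%N (p ^ j * y2)%N <= omega_t t y1 y2 + (i != j))%N.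
Proof.
move=> pp h1 h2; rewrite /omega_t quot_pow //.
have -> : (i != j) = ((i - minn i j) + (j - minn i j) != 0)%N by apply/idP/idP; lia.
exact: size_filter_primes_mul.
Qed.

End S5.

Unset Implicit Arguments. Set Strict Implicit. Set Printing Implicit Defensive.

Theorem lemma3p1 (R : realType) (p0 : R -> R -> R)
  (hp0 : forall e c : R, 0 < e <= 2 / 5 -> 0 < c -> 0 < p0 e c)
  (psi theta : nat -> R) (eps C t K : R) (f g : nat -> R)
  (V W : set nat) (E : set (nat * nat))
  (hce : counterexample p0 psi theta eps C t K f g V W E)
  (hmin : forall (psi' theta' : nat -> R) (eps' C' t' K' : R) (f' g' : nat -> R)
            (V' W' : set nat) (E' : set (nat * nat)),
            counterexample p0 psi' theta' eps' C' t' K' f' g' V' W' E' ->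
            (cardP psi theta <= cardP psi' theta')%N)
  (p : nat) (hp : Pset psi theta p) (i j : nat) :
  let Vi := [set v | V v /\ logn p v = i] in
  let Wj := [set w | W w /\ logn p w = j] in
  let m := muE f g psi theta (E `&` (Vi `*` Wj)) / muE f g psi theta E in
  let alpha := muS f psi Vi / muS f psi V in
  let beta := muS g theta Wj / muS g theta W in
  let q := 2 / (1 - 2 * eps) in
  let q' := 2 / (1 + 2 * eps) in
  m <= (100 * expR C) `^ (- (if p%:R <= p0 eps C then 1 else 0))
       * (p%:R) `^ (- `|i%:R - j%:R| / q)
       * (alpha * beta * expR ((if i != j then 1 else 0) * C)) `^ (1 / q').
Proof.
cbv zeta.
case: hce => /andP[e0 e25] C0 [nfs_psi nfs_theta] [adf adg] [t1 Esub hineq].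
have [f0 [[f1 fm] fc]] := adf.
have [g0 [[g1 gm] gc]] := adg.
have [pp _] := hp.
pose k := minn i j.
pose psi' := shiftf p i (j - k) psi.
pose theta' := shiftf p j (i - k) theta.
pose V' := [set v | V (p ^ i * v)%N].
pose W' := [set w | W (p ^ j * w)%N].
pose E' := [set y : nat * nat | ~~ (p %| y.1)%N /\ ~~ (p %| y.2)%N /\
                                E ((p ^ i * y.1)%N, (p ^ j * y.2)%N)].
pose b : R := if i != j then 1 else 0.
pose K' := K - b.
have hE : forall x, E x -> [/\ (0 < x.1)%N, (0 < x.2)%N, V x.1 & W x.2].
  by move=> x /Esub [[[x1 _] [[x2 _] _]] [Vx Wx]].
have Esub' : E' `<=` Eset psi' theta' t K' `&` (V' `*` W').
  move=> [y1 y2] [/= h1 [h2 Ey]].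
  have [[/= s1 [s2 [D Ko]]] [Vy Wy]] := Esub _ Ey.
  split; last by [].
  split; first exact/(supp_shift _ _ _ _ pp).
  split; first exact/(supp_shift _ _ _ _ pp).
  split; first by rewrite /psi' /theta' /= Dpt_shift.
  have ho := omega_shift (R:=R) t i j pp h1 h2.
  have hb : ((i != j)%:R : R) = b by rewrite /b; case: (i != j).
  rewrite /K' /=; move: Ko ho; rewrite -(ler_nat R) natrD hb; lra.
have [psi0 fpsi] := nfs_psi.
have [theta0 ftheta] := nfs_theta.
have hcard : (cardP psi' theta' < cardP psi theta)%N.
  have [sub np] := Pset_shift psi theta i j (j - k) (i - k) pp.
  exact: (fcard_lt_sub (Pset_fin fpsi ftheta) sub hp np).
have hnot : ~ counterexample p0 psi' theta' eps C t K' f g V' W' E'.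
  by move=> /hmin; rewrite leqNgt hcard.
have h' : muE f g psi' theta' E' <= (100 * expR C) `^ (Pbig p0 psi' theta' eps C)
    * (Logt t) `^ ((expR (40 * C) - 1) / 2)
    * (muS f psi' V' * muS g theta' W' * expR (- (C * K'))) `^ (1 / 2 + eps).
  rewrite leNgt; apply/negP => H; apply: hnot; split => //.
  - by rewrite e0 e25.
  - by split; apply: shift_nfs.
pose ip : R := if p%:R <= p0 eps C then 1 else 0.
have hP : Pbig p0 psi' theta' eps C + ip <= Pbig p0 psi theta eps C.
  rewrite /Pbig -addrA lerD2l /ip.
  have [sub np] := Pset_shift psi theta i j (j - k) (i - k) pp.
  have finB : finite_set (Pset psi theta `&` [set p | (1 <= p)%N /\ p%:R <= p0 eps C]).
    by apply: finite_setIl; apply: Pset_fin.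
  have subI : Pset psi' theta' `&` [set p | (1 <= p)%N /\ p%:R <= p0 eps C] `<=`
              Pset psi theta `&` [set p | (1 <= p)%N /\ p%:R <= p0 eps C].
    by move=> x [Px Ix]; split => //; apply: sub.
  case: ifP => hpp.
    rewrite natr1 ler_nat; apply: (fcard_lt_sub (x := p) finB subI).
      by split => //; split => //; apply: prime_gt0.
    by move=> [].
  by rewrite addr0 ler_nat; exact: (fcard_le_sub finB subI).
have fmP : fmulP f := fm.
have gmP : fmulP g := gm.
have hVi := @muS_shift R f psi p i (j - k) V pp fmP.
have hWj := @muS_shift R g theta p j (i - k) W pp gmP.
have hEij := @muE_shift R f g psi theta p i j (j - k) (i - k) V W E pp fmP gmP hE.
rewrite hVi hWj hEij.
set cV := f (p ^ i)%N / _.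
set cW := g (p ^ j)%N / _.
have hq' : 1 / (2 / (1 + 2 * eps)) = 1 / 2 + eps.
  by field; apply: lt0r_neq0; lra.
rewrite hq'.
have eK : expR (- (C * K')) = expR (- (C * K)) * expR (b * C).
  by rewrite -expRD /K'; congr expR; ring.
rewrite eK in h'.
have A1 : 1 <= 100 * expR C.
  have h := expR_ge1Dx C; clear -h C0; lra.
have L0 : 0 < Logt t `^ ((expR (40 * C) - 1) / 2).
  apply: powR_gt0; rewrite /Logt; apply: lt_le_trans ltr01 _; by rewrite le_max lexx.
have a0 : 0 < 1 / 2 + eps by clear -e0; lra.
have a1 : 0 < 1 - (1 / 2 + eps) by clear -e25; lra.
have ME0 : 0 < muE f g psi theta E.
  apply: le_lt_trans hineq; by rewrite !mulr_ge0 ?powR_ge0 // ltW.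
have [x Ex hx] := @fsumr_gt0 R _ [::] _ _ ME0.
have [_ _ Vx Wx] := hE x Ex.
have mx1 := mu1_ge0 x.1 f0 psi0.
have mx2 := mu1_ge0 x.2 g0 theta0.
have px1 : 0 < mu1 f psi x.1.
  rewrite lt_def mx1 andbT; apply/negP => /eqP h0; move: hx; by rewrite h0 mul0r ltxx.
have px2 : 0 < mu1 g theta x.2.
  rewrite lt_def mx2 andbT; apply/negP => /eqP h0; move: hx; by rewrite h0 mulr0 ltxx.
have MV0 : 0 < muS f psi V.
  apply: (lt_le_trans px1).
  have := @fsum_le_sub R _ [set x.1] V (mu1 f psi).
  rewrite fsbig_set1; apply; first by move=> y ->.
    by move=> y _; apply: mu1_ge0.
  exact: mu1_fin.
have MW0 : 0 < muS g theta W.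
  apply: (lt_le_trans px2).
  have := @fsum_le_sub R _ [set x.2] W (mu1 g theta).
  rewrite fsbig_set1; apply; first by move=> y ->.
    by move=> y _; apply: mu1_ge0.
  exact: mu1_fin.
have [psi'0 _] := shift_nfs i (j - k) pp nfs_psi.
have [theta'0 _] := shift_nfs j (i - k) pp nfs_theta.
have MV'0 : 0 <= muS f psi' V' by apply: fsumr_ge0 => v _; apply: mu1_ge0.
have MW'0 : 0 <= muS g theta' W' by apply: fsumr_ge0 => v _; apply: mu1_ge0.
have M'0 : 0 <= muE f g psi' theta' E'.
  by apply: fsumr_ge0 => v _; apply: mulr_ge0; apply: mu1_ge0.
have ex0 : 0 < expR (- (C * K)) by apply: expR_gt0.
have e10 : 0 < expR (b * C) by apply: expR_gt0.
have cV0 : 0 <= cV by rewrite divr_ge0 // f0 // expn_gt0 prime_gt0.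
have cW0 : 0 <= cW by rewrite divr_ge0 // g0 // expn_gt0 prime_gt0.
pose d := ((i - k) + (j - k))%N.
have hd : `|i%:R - j%:R| = d%:R :> R.
  rewrite /d /k; case: (leqP i j) => h.
    rewrite subnn add0n distrC ger0_norm ?subr_ge0 ?ler_nat //.
    by rewrite natrB.
  rewrite subnn addn0 ger0_norm ?subr_ge0 ?ler_nat ?(ltnW h) //.
  by rewrite natrB // ltnW.
have hexp : - `|i%:R - j%:R| / (2 / (1 - 2 * eps)) = - d%:R * (1 - (1 / 2 + eps)).
  rewrite hd; field; apply: lt0r_neq0; clear -e25; lra.
have pg0 : forall n, 0 < (p ^ n)%N%:R :> R by move=> n; rewrite ltr0n expn_gt0 prime_gt0.
have hcV : cV <= ((p ^ (j - k))%N%:R)^-1.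
  rewrite /cV ler_pdivrMr; last by rewrite mulr_gt0.
  have -> : ((p ^ (j - k))%N%:R)^-1 * ((p ^ i)%N%:R * (p ^ (j - k))%N%:R) = (p ^ i)%N%:R :> R.
    by field; apply: lt0r_neq0.
  by apply: f_le_id => //; rewrite expn_gt0 prime_gt0.
have hcW : cW <= ((p ^ (i - k))%N%:R)^-1.
  rewrite /cW ler_pdivrMr; last by rewrite mulr_gt0.
  have -> : ((p ^ (i - k))%N%:R)^-1 * ((p ^ j)%N%:R * (p ^ (i - k))%N%:R) = (p ^ j)%N%:R :> R.
    by field; apply: lt0r_neq0.
  by apply: f_le_id => //; rewrite expn_gt0 prime_gt0.
have hc : (cV * cW) `^ (1 - (1 / 2 + eps)) <= p%:R `^ (- `|i%:R - j%:R| / (2 / (1 - 2 * eps))).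
  rewrite hexp powRrM powRN powR_mulrn ?ler0n // -natrX.
  apply: (ge0_ler_powR (ltW a1)).
  - by rewrite nnegrE mulr_ge0.
  - by rewrite nnegrE invr_ge0 ler0n.
  rewrite /d expnD natrM invfM mulrC.
  by apply: ler_pM => //; rewrite invr_ge0 ltW.
exact: (final_alg A1 L0 a0 a1 MV0 MW0 MV'0 MW'0 ex0 e10 cV0 cW0 M'0 hc hP hineq h').
Qed.
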